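(* Let $\beta_1,\beta_2>0$, $\tau\in(0,1)$, and suppose $(\bar x,\bar y)\in X\times\mathbb{R}^m$ satisfies the excessive gap condition $f(\bar x;\beta_2)\le d(\bar y;\beta_1)$. Set $\beta_1^+:=(1-\tau)\beta_1$, $\beta_2^+:=(1-\tau)\beta_2$ and define $$\hat x:=(1-\tau)\bar x+\tau x^*(\bar y;\beta_1),\qquad \bar y^+:=(1-\tau)\bar y+\tau y^*(\hat x;\beta_2^+),\qquad \bar x^+:=P(\hat x;\beta_2^+).$$ If $$\beta_1\beta_2\ge\frac{2\tau^2}{(1-\tau)^2}\max_{i=1,2}\frac{\|A_i\|^2}{\sigma_i},$$ then $(\bar x^+,\bar y^+)\in X\times\mathbb{R}^m$ and $f(\bar x^+;\beta_2^+)\le d(\bar y^+;\beta_1^+)$.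
   Context: All spaces carry the Euclidean inner product and norm $\|\cdot\|$; for a matrix, $\|\cdot\|$ is the induced operator norm. For $i=1,2$: $X_i\subset\mathbb{R}^{n_i}$ is nonempty, closed, convex and bounded; $\phi_i:\mathbb{R}^{n_i}\to\mathbb{R}$ is convex; $A_i\in\mathbb{R}^{m\times n_i}$; $b\in\mathbb{R}^m$. Write $x=(x_1,x_2)$, $X=X_1\times X_2$, $A=[A_1,A_2]$ (so $Ax=A_1x_1+A_2x_2$), $\phi(x)=\phi_1(x_1)+\phi_2(x_2)$. For $i=1,2$, $p_i$ is a prox-function of $X_i$: continuous and strongly convex on $X_i$ with convexity parameter $\sigma_i>0$, with prox-center $x_i^c=\arg\min_{x_i\in X_i}p_i(x_i)$ normalized so $p_i(x_i^c)=0$. For $\beta_1>0$, $d(y;\beta_1):=\min_{x\in X}\{\phi(x)+y^T(Ax-b)+\beta_1(p_1(x_1)+p_2(x_2))\}$, whose (unique) minimizer is denoted $x^*(y;\beta_1)=(x_1^*(y;\beta_1),x_2^*(y;\beta_1))$. For $\beta_2>0$, $y^*(x;\beta_2):=\frac{1}{\beta_2}(Ax-b)$ and $f(x;\beta_2):=\phi(x)+\frac{1}{2\beta_2}\|Ax-b\|^2$. With $L_i^\psi(\beta_2):=\frac{2\|A_i\|^2}{\beta_2}$, the proximal mapping is $P_i(\hat x;\beta_2):=\arg\min_{x_i\in X_i}\{\phi_i(x_i)+y^*(\hat x;\beta_2)^TA_i(x_i-\hat x_i)+\frac{L_i^\psi(\beta_2)}{2}\|x_i-\hat x_i\|^2\}$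 for $\hat x=(\hat x_1,\hat x_2)$, and $P(\hat x;\beta_2):=(P_1(\hat x;\beta_2),P_2(\hat x;\beta_2))$. *)

(* Defs.v *)
From mathcomp Require Import all_boot.
From Stdlib Require Import Reals.
Set Implicit Arguments. Unset Strict Implicit.
Local Open Scope R_scope.

Definition vec (n : nat) := 'I_n -> R.
Definition mat (m n : nat) := 'I_m -> 'I_n -> R.

Definition vadd n (u v : vec n) : vec n := fun i => u i + v i.
Definition vsub n (u v : vec n) : vec n := fun i => u i - v i.
Definition vscal n (a : R) (u : vec n) : vec n := fun i => a * u i.

Definition dot n (u v : vec n) : R := \big[Rplus/0]_(i < n) (u i * v i).
Definition nrm n (u : vec n) : R := sqrt (dot u u).

Definition mv m n (A : mat m n) (x : vec n) : vec m :=
  fun r => \big[Rplus/0]_(j < n) (A r j * x j).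

Definition is_opnorm m n (A : mat m n) (c : R) : Prop :=
  is_lub (fun r => exists x : vec n, nrm x <= 1 /\ r = nrm (mv A x)) c.

Definition enonempty_set n (S : vec n -> Prop) := exists x, S x.
Definition eclosed_set n (S : vec n -> Prop) :=
  forall x, (forall eps, 0 < eps -> exists y, S y /\ nrm (vsub y x) < eps) -> S x.
Definition econvex_set n (S : vec n -> Prop) :=
  forall x y t, S x -> S y -> 0 <= t <= 1 ->
    S (vadd (vscal t x) (vscal (1 - t) y)).
Definition ebounded_set n (S : vec n -> Prop) :=
  exists M, forall x, S x -> nrm x <= M.

Definition econvex_fun n (g : vec n -> R) :=
  forall x y t, 0 <= t <= 1 ->
    g (vadd (vscal t x) (vscal (1 - t) y)) <= t * g x + (1 - t) * g y.

Definition econtinuous_on n (S : vec n -> Prop) (g : vec n -> R) :=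
  forall x, S x -> forall eps, 0 < eps -> exists delta, 0 < delta /\
    forall y, S y -> nrm (vsub y x) < delta -> Rabs (g y - g x) < eps.

Definition estrongly_convex_on n (S : vec n -> Prop) (g : vec n -> R) (sigma : R) :=
  forall x y t, S x -> S y -> 0 <= t <= 1 ->
    g (vadd (vscal t x) (vscal (1 - t) y)) <=
      t * g x + (1 - t) * g y - sigma / 2 * t * (1 - t) * (nrm (vsub x y)) ^ 2.

Definition eprox_function n (S : vec n -> Prop) (p : vec n -> R) (sigma : R) :=
  econtinuous_on S p /\ 0 < sigma /\ estrongly_convex_on S p sigma /\
  exists xc, S xc /\ p xc = 0 /\ (forall x, S x -> p xc <= p x).

Definition eis_argmin n (S : vec n -> Prop) (g : vec n -> R) (x : vec n) :=
  S x /\ forall z, S z -> g x <= g z.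

Section Problem.
Variables (m n1 n2 : nat) (phi1 : vec n1 -> R) (phi2 : vec n2 -> R)
  (A1 : mat m n1) (A2 : mat m n2) (b : vec m)
  (p1 : vec n1 -> R) (p2 : vec n2 -> R).

Definition resid (x1 : vec n1) (x2 : vec n2) : vec m :=
  vsub (vadd (mv A1 x1) (mv A2 x2)) b.

(* objective defining d(y; beta1) *)
Definition dobj (y : vec m) (beta1 : R) (x1 : vec n1) (x2 : vec n2) : R :=
  phi1 x1 + phi2 x2 + dot y (resid x1 x2) + beta1 * (p1 x1 + p2 x2).

Definition is_xstar (X1 : vec n1 -> Prop) (X2 : vec n2 -> Prop)
  (y : vec m) (beta1 : R) (x1 : vec n1) (x2 : vec n2) : Prop :=
  X1 x1 /\ X2 x2 /\
  forall z1 z2, X1 z1 -> X2 z2 -> dobj y beta1 x1 x2 <= dobj y beta1 z1 z2.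

Definition ystar (x1 : vec n1) (x2 : vec n2) (beta2 : R) : vec m :=
  vscal (/ beta2) (resid x1 x2).

Definition fval (x1 : vec n1) (x2 : vec n2) (beta2 : R) : R :=
  phi1 x1 + phi2 x2 + / (2 * beta2) * (nrm (resid x1 x2)) ^ 2.

(* objectives of the proximal mappings P_1, P_2; nA1, nA2 are ||A1||, ||A2|| *)
Definition Pobj1 (nA1 : R) (xh1 : vec n1) (xh2 : vec n2) (beta2 : R)
  (z : vec n1) : R :=
  phi1 z + dot (ystar xh1 xh2 beta2) (mv A1 (vsub z xh1))
  + (2 * nA1 ^ 2 / beta2) / 2 * (nrm (vsub z xh1)) ^ 2.

Definition Pobj2 (nA2 : R) (xh1 : vec n1) (xh2 : vec n2) (beta2 : R)
  (z : vec n2) : R :=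
  phi2 z + dot (ystar xh1 xh2 beta2) (mv A2 (vsub z xh2))
  + (2 * nA2 ^ 2 / beta2) / 2 * (nrm (vsub z xh2)) ^ 2.

End Problem.

(* Main.v *)
Require Import Defs.
From mathcomp Require Import all_boot.
From Stdlib Require Import Reals Lra FunctionalExtensionality.
From HB Require Import structures.
Set Implicit Arguments. Unset Strict Implicit.
Local Open Scope R_scope.
HB.instance Definition _ := Monoid.isComLaw.Build R 0 Rplus (fun a b c => esym (Rplus_assoc a b c)) Rplus_comm Rplus_0_l.

Lemma sum_add n (F G : 'I_n -> R) :
  \big[Rplus/0]_(i < n) (F i + G i) = \big[Rplus/0]_(i < n) F i + \big[Rplus/0]_(i < n) G i.
Proof. by rewrite big_split. Qed.

Lemma sum_scal n a (F : 'I_n -> R) :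
  \big[Rplus/0]_(i < n) (a * F i) = a * \big[Rplus/0]_(i < n) F i.
Proof.
apply: (big_rec2 (fun x y => x = a * y)) => [|i x y _ ->]; ring.
Qed.

Lemma sum_ge0 n (F : 'I_n -> R) : (forall i, 0 <= F i) -> 0 <= \big[Rplus/0]_(i < n) F i.
Proof.
move=> H; apply: (big_rec (fun x => 0 <= x)) => [|i x _ hx]; first lra.
have := H i; lra.
Qed.

Lemma dot_addl n (u v w : vec n) : dot (vadd u v) w = dot u w + dot v w.
Proof. rewrite /dot -sum_add; apply: eq_bigr => i _; rewrite /vadd; ring. Qed.
Lemma dot_subl n (u v w : vec n) : dot (vsub u v) w = dot u w - dot v w.
Proof.
rewrite /dot. have -> : forall a b : R, a - b = a + (-1) * b by move=> a b; ring.
rewrite -sum_scal -sum_add; apply: eq_bigr => i _; rewrite /vsub; ring. Qed.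
Lemma dot_scall n a (u w : vec n) : dot (vscal a u) w = a * dot u w.
Proof. rewrite /dot -sum_scal; apply: eq_bigr => i _; rewrite /vscal; ring. Qed.
Lemma dot_comm n (u w : vec n) : dot u w = dot w u.
Proof. rewrite /dot; apply: eq_bigr => i _; ring. Qed.
Lemma dot_addr n (u v w : vec n) : dot w (vadd u v) = dot w u + dot w v.
Proof. by rewrite dot_comm dot_addl !(dot_comm w). Qed.
Lemma dot_subr n (u v w : vec n) : dot w (vsub u v) = dot w u - dot w v.
Proof. by rewrite dot_comm dot_subl !(dot_comm w). Qed.
Lemma dot_scalr n a (u w : vec n) : dot w (vscal a u) = a * dot w u.
Proof. by rewrite dot_comm dot_scall (dot_comm w). Qed.
Lemma dot_ge0 n (u : vec n) : 0 <= dot u u.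
Proof. apply: sum_ge0 => i; nra. Qed.
Lemma nrm2 n (u : vec n) : nrm u ^ 2 = dot u u.
Proof. by rewrite /nrm pow2_sqrt //; apply: dot_ge0. Qed.
Lemma nrm_scal n a (u : vec n) : nrm (vscal a u) = Rabs a * nrm u.
Proof.
rewrite /nrm dot_scall dot_scalr -Rmult_assoc sqrt_mult_alt; last by nra.
by rewrite -sqrt_Rsqr_abs /Rsqr.
Qed.

Lemma mv_add m n (A : mat m n) u v : mv A (vadd u v) = vadd (mv A u) (mv A v).
Proof. apply: functional_extensionality => r; rewrite /mv /vadd -sum_add; apply: eq_bigr => i _; ring. Qed.
Lemma mv_scal m n (A : mat m n) a u : mv A (vscal a u) = vscal a (mv A u).
Proof. apply: functional_extensionality => r; rewrite /mv /vscal -sum_scal; apply: eq_bigr => i _; ring. Qed.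
Lemma mv_sub m n (A : mat m n) u v : mv A (vsub u v) = vsub (mv A u) (mv A v).
Proof.
have -> : vsub u v = vadd u (vscal (-1) v).
  by apply: functional_extensionality => i; rewrite /vsub /vadd /vscal; ring.
rewrite mv_add mv_scal; apply: functional_extensionality => i; rewrite /vsub /vadd /vscal; ring.
Qed.

Lemma opnorm_bound m n (A : mat m n) c : is_opnorm A c ->
  forall d, dot (mv A d) (mv A d) <= c ^ 2 * dot d d.
Proof.
move=> [Hub _] d.
have Hb : forall x, nrm x <= 1 -> nrm (mv A x) <= c.
  by move=> x hx; apply: Hub; exists x.
rewrite -!nrm2.
have hs := sqrt_pos (dot d d). have ht := sqrt_pos (dot (mv A d) (mv A d)).
rewrite /nrm in hs ht *.
set s := sqrt (dot d d) in hs *. set t := sqrt (dot (mv A d) (mv A d)) in ht *.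
case: (Rlt_le_dec 0 s) => hs0.
- have := Hb (vscal (/ s) d). rewrite mv_scal !nrm_scal Rabs_right; last first.
    by apply: Rle_ge; apply: Rlt_le; apply: Rinv_0_lt_compat.
  rewrite /nrm -/s -/t Rinv_l; last by lra.
  move=> h. have {}h := h (Rle_refl _).
  have : t <= c * s.
    have e : t = s * (/ s * t) by field; lra.
    rewrite e; nra.
  move=> hts. nra.
- have hs0' : s = 0 by lra.
  case: (Rlt_le_dec 0 t) => ht0; last first.
    have -> : t = 0 by lra. rewrite hs0'; nra.
  exfalso.
  have := Hb (vscal ((Rabs c + 1) / t) d). rewrite mv_scal !nrm_scal /nrm -/s -/t hs0'.
  have hk : 0 < (Rabs c + 1) / t by apply: Rdiv_lt_0_compat; [have := Rabs_pos c; lra | lra].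
  rewrite Rabs_right; last lra.
  rewrite Rmult_0_r. move=> h; have {}h := h ltac:(lra).
  have : (Rabs c + 1) / t * t = Rabs c + 1 by field; lra.
  have := Rle_abs c. lra.
Qed.

Lemma real_sc (G0 Gz S : R) : 0 <= S ->
  (forall t, 0 < t <= 1 -> G0 <= t * Gz + (1 - t) * G0 - t * (1 - t) * S) ->
  G0 + S <= Gz.
Proof.
move=> hS H.
have h1 := H 1 ltac:(lra).
case: (Rle_lt_dec (G0 + S) Gz) => // hlt.
exfalso.
have hSp : 0 < S by lra.
set D := G0 + S - Gz.
have eD : D = G0 + S - Gz by [].
have hD : 0 < D by lra.
set t := D / (2 * S).
have et : t = D / (2 * S) by [].
clearbody t D.
have ht : 0 < t <= 1.
  split; first by rewrite et; apply: Rdiv_lt_0_compat; lra.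
  rewrite et; apply: (Rmult_le_reg_r (2 * S)); first lra.
  rewrite /Rdiv Rmult_assoc Rinv_l; lra.
have h2 := H t ht.
have h3 : G0 - Gz + (1 - t) * S <= 0.
  have : t * (G0 - Gz + (1 - t) * S) <= 0.
    have e : t * (G0 - Gz + (1 - t) * S) = G0 - (t * Gz + (1 - t) * G0 - t * (1 - t) * S) by ring.
    rewrite e; lra.
  move=> h; case: (Rle_lt_dec (G0 - Gz + (1 - t) * S) 0) => // h4; nra.
have : t * S = D / 2 by rewrite et; field; lra.
nra.
Qed.

Lemma resid_comb m n1 n2 (A1 : mat m n1) (A2 : mat m n2) b t z1 z2 x1 x2 :
  resid A1 A2 b (vadd (vscal t z1) (vscal (1 - t) x1)) (vadd (vscal t z2) (vscal (1 - t) x2))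
  = vadd (vscal t (resid A1 A2 b z1 z2)) (vscal (1 - t) (resid A1 A2 b x1 x2)).
Proof.
rewrite /resid !mv_add !mv_scal; apply: functional_extensionality => i.
rewrite /vadd /vsub /vscal; ring.
Qed.

Lemma dobj_sc m n1 n2 (X1 : vec n1 -> Prop) (X2 : vec n2 -> Prop) phi1 phi2
  (A1 : mat m n1) (A2 : mat m n2) b p1 p2 s1 s2 y beta x1 x2 z1 z2 :
  econvex_set X1 -> econvex_set X2 -> econvex_fun phi1 -> econvex_fun phi2 ->
  estrongly_convex_on X1 p1 s1 -> estrongly_convex_on X2 p2 s2 ->
  0 <= beta -> 0 <= s1 -> 0 <= s2 ->
  is_xstar phi1 phi2 A1 A2 b p1 p2 X1 X2 y beta x1 x2 -> X1 z1 -> X2 z2 ->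
  dobj phi1 phi2 A1 A2 b p1 p2 y beta x1 x2
    + beta / 2 * (s1 * nrm (vsub z1 x1) ^ 2 + s2 * nrm (vsub z2 x2) ^ 2)
  <= dobj phi1 phi2 A1 A2 b p1 p2 y beta z1 z2.
Proof.
move=> cX1 cX2 cf1 cf2 sp1 sp2 hb hs1 hs2 [hx1 [hx2 hmin]] hz1 hz2.
apply: real_sc.
  have := pow2_ge_0 (nrm (vsub z1 x1)); have := pow2_ge_0 (nrm (vsub z2 x2)).
  move=> h1 h2; apply: Rmult_le_pos; first lra; nra.
move=> t ht.
have ht' : 0 <= t <= 1 by lra.
have hw1 := cX1 _ _ _ hz1 hx1 ht'. have hw2 := cX2 _ _ _ hz2 hx2 ht'.
have := hmin _ _ hw1 hw2.
rewrite /dobj resid_comb dot_addr !dot_scalr.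
have e1 := cf1 z1 x1 t ht'. have e2 := cf2 z2 x2 t ht'.
have f1 := sp1 _ _ _ hz1 hx1 ht'. have f2 := sp2 _ _ _ hz2 hx2 ht'.
set P1 := p1 (vadd _ _) in f1 *. set P2 := p2 (vadd _ _) in f2 *.
have g : beta * (P1 + P2) <= beta * (t * p1 z1 + (1 - t) * p1 x1 - s1 / 2 * t * (1 - t) * nrm (vsub z1 x1) ^ 2
     + (t * p2 z2 + (1 - t) * p2 x2 - s2 / 2 * t * (1 - t) * nrm (vsub z2 x2) ^ 2)).
  apply: Rmult_le_compat_l => //; lra.
move=> h. nra.
Qed.

Theorem theorem1
  (m n1 n2 : nat)
  (X1 : vec n1 -> Prop) (X2 : vec n2 -> Prop)
  (phi1 : vec n1 -> R) (phi2 : vec n2 -> R)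
  (A1 : mat m n1) (A2 : mat m n2) (b : vec m)
  (p1 : vec n1 -> R) (p2 : vec n2 -> R) (sigma1 sigma2 : R)
  (nA1 nA2 : R)
  (hX1 : enonempty_set X1 /\ eclosed_set X1 /\ econvex_set X1 /\ ebounded_set X1)
  (hX2 : enonempty_set X2 /\ eclosed_set X2 /\ econvex_set X2 /\ ebounded_set X2)
  (hphi1 : econvex_fun phi1) (hphi2 : econvex_fun phi2)
  (hp1 : eprox_function X1 p1 sigma1) (hp2 : eprox_function X2 p2 sigma2)
  (hnA1 : is_opnorm A1 nA1) (hnA2 : is_opnorm A2 nA2)
  (beta1 beta2 tau : R)
  (hbeta1 : 0 < beta1) (hbeta2 : 0 < beta2) (htau : 0 < tau < 1)
  (xb1 : vec n1) (xb2 : vec n2) (yb : vec m)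
  (hxb1 : X1 xb1) (hxb2 : X2 xb2)
  (xs1 : vec n1) (xs2 : vec n2)
  (hxs : is_xstar phi1 phi2 A1 A2 b p1 p2 X1 X2 yb beta1 xs1 xs2)
  (hgap : fval phi1 phi2 A1 A2 b xb1 xb2 beta2
          <= dobj phi1 phi2 A1 A2 b p1 p2 yb beta1 xs1 xs2)
  (hbeta : beta1 * beta2 >=
           2 * tau ^ 2 / (1 - tau) ^ 2 * Rmax (nA1 ^ 2 / sigma1) (nA2 ^ 2 / sigma2))
  (xh1 : vec n1) (xh2 : vec n2)
  (hxh1 : xh1 = vadd (vscal (1 - tau) xb1) (vscal tau xs1))
  (hxh2 : xh2 = vadd (vscal (1 - tau) xb2) (vscal tau xs2))
  (yp : vec m)
  (hyp : yp = vadd (vscal (1 - tau) yb)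
                   (vscal tau (ystar A1 A2 b xh1 xh2 ((1 - tau) * beta2))))
  (xp1 : vec n1) (xp2 : vec n2)
  (hxp1 : eis_argmin X1 (Pobj1 phi1 A1 A2 b nA1 xh1 xh2 ((1 - tau) * beta2)) xp1)
  (hxp2 : eis_argmin X2 (Pobj2 phi2 A1 A2 b nA2 xh1 xh2 ((1 - tau) * beta2)) xp2) :
  X1 xp1 /\ X2 xp2 /\
  forall zs1 zs2,
    is_xstar phi1 phi2 A1 A2 b p1 p2 X1 X2 yp ((1 - tau) * beta1) zs1 zs2 ->
    fval phi1 phi2 A1 A2 b xp1 xp2 ((1 - tau) * beta2)
      <= dobj phi1 phi2 A1 A2 b p1 p2 yp ((1 - tau) * beta1) zs1 zs2.
Proof.
case: hX1 => _ [_ [cX1 _]]. case: hX2 => _ [_ [cX2 _]].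
case: hp1 => _ [hs1 [sc1 _]]. case: hp2 => _ [hs2 [sc2 _]].
case: hxp1 => hxp1X hxp1m. case: hxp2 => hxp2X hxp2m.
split => //; split => // zs1 zs2 hzs.
case: (hzs) => hz1 [hz2 _].
have F1 := dobj_sc cX1 cX2 hphi1 hphi2 sc1 sc2 (Rlt_le _ _ hbeta1) (Rlt_le _ _ hs1) (Rlt_le _ _ hs2) hxs hz1 hz2.
have htau' : 0 <= tau <= 1 by lra.
have hu1 : X1 (vadd (vscal tau zs1) (vscal (1 - tau) xb1)) by apply: cX1.
have hu2 : X2 (vadd (vscal tau zs2) (vscal (1 - tau) xb2)) by apply: cX2.
have U1 := hxp1m _ hu1. have U2 := hxp2m _ hu2.
have C1 := hphi1 zs1 xb1 tau htau'. have C2 := hphi2 zs2 xb2 tau htau'.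
have O1 := opnorm_bound hnA1 (vsub xp1 xh1). have O2 := opnorm_bound hnA2 (vsub xp2 xh2).
have eu1 : vsub (vadd (vscal tau zs1) (vscal (1 - tau) xb1)) xh1 = vscal tau (vsub zs1 xs1).
  by rewrite hxh1; apply: functional_extensionality => i; rewrite /vsub /vadd /vscal; ring.
have eu2 : vsub (vadd (vscal tau zs2) (vscal (1 - tau) xb2)) xh2 = vscal tau (vsub zs2 xs2).
  by rewrite hxh2; apply: functional_extensionality => i; rewrite /vsub /vadd /vscal; ring.
have er : resid A1 A2 b xp1 xp2 = vadd (resid A1 A2 b xh1 xh2)
    (vadd (mv A1 (vsub xp1 xh1)) (mv A2 (vsub xp2 xh2))).
  by rewrite /resid !mv_sub; apply: functional_extensionality => i; rewrite /vsub /vadd; ring.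
have ez : resid A1 A2 b zs1 zs2 = vadd (resid A1 A2 b xs1 xs2)
    (vadd (mv A1 (vsub zs1 xs1)) (mv A2 (vsub zs2 xs2))).
  by rewrite /resid !mv_sub; apply: functional_extensionality => i; rewrite /vsub /vadd; ring.
have eh : resid A1 A2 b xh1 xh2 = vadd (vscal (1 - tau) (resid A1 A2 b xb1 xb2))
    (vscal tau (resid A1 A2 b xs1 xs2)).
  rewrite hxh1 hxh2 /resid !mv_add !mv_scal; apply: functional_extensionality => i.
  by rewrite /vsub /vadd /vscal; ring.
have hq : forall v : R, 2 * v ^ 2 / ((1 - tau) * beta2) / 2 = v ^ 2 * / ((1 - tau) * beta2).
  move=> v; field; split; lra.
have hq2 : / (2 * ((1 - tau) * beta2)) = / 2 * / ((1 - tau) * beta2) by rewrite Rinv_mult.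
have nsc : forall n (d : vec n), nrm (vscal tau d) ^ 2 = tau ^ 2 * dot d d.
  by move=> n d; rewrite nrm_scal Rabs_right; [rewrite Rpow_mult_distr nrm2 | lra].
rewrite /Pobj1 /ystar eu1 hq mv_scal !dot_scall !dot_scalr nsc nrm2 in U1.
rewrite /Pobj2 /ystar eu2 hq mv_scal !dot_scall !dot_scalr nsc nrm2 in U2.
rewrite /dobj ez !nrm2 in F1.
rewrite /fval /dobj nrm2 in hgap.
rewrite /fval /dobj hyp er ez /ystar hq2 nrm2.
move: hzs hxs hyp hxh1 hxh2 hxp1m hxp2m => _ _ _ _ _ _ _.
set E1 := vsub xp1 xh1 in O1 U1 *. set E2 := vsub xp2 xh2 in O2 U2 *.
set D1 := vsub zs1 xs1 in U1 F1 *. set D2 := vsub zs2 xs2 in U2 F1 *.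
set v1 := mv A1 E1 in O1 U1 *. set v2 := mv A2 E2 in O2 U2 *.
set w1 := mv A1 D1 in U1 F1 *. set w2 := mv A2 D2 in U2 F1 *.
set h := resid A1 A2 b xh1 xh2 in eh U1 U2 *.
set a := resid A1 A2 b xb1 xb2 in eh hgap *.
set c := resid A1 A2 b xs1 xs2 in eh hgap F1 *.
set ib := / ((1 - tau) * beta2) in U1 U2 *.
have Hib0 : ib = / ((1 - tau) * beta2) by [].
have Hib : / (2 * beta2) = / 2 * ((1 - tau) * ib) by rewrite /ib; field; lra.
have ibp : 0 < ib by rewrite /ib; apply: Rinv_0_lt_compat; nra.
clearbody v1 v2 w1 w2 E1 E2 D1 D2 h c a ib.
rewrite Hib in hgap.
rewrite !dot_addl !dot_addr !dot_scall ?dot_scalr (dot_comm v1 h) (dot_comm v2 h) (dot_comm v2 v1).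
rewrite !dot_addr in F1.
have Qhh : dot h h = (1-tau)^2 * dot a a + 2*tau*(1-tau)*dot a c + tau^2 * dot c c.
  by rewrite eh !dot_addl !dot_addr !dot_scall !dot_scalr (dot_comm c a); ring.
have Qhc : dot h c = (1-tau) * dot a c + tau * dot c c.
  by rewrite eh !dot_addl !dot_scall; ring.
have Quad : / 2 * ib * dot h h - tau * (ib * dot h c) <= (1 - tau) * (/ 2 * ((1 - tau) * ib) * dot a a).
  have e : / 2 * ib * dot h h - tau * (ib * dot h c) - (1 - tau) * (/ 2 * ((1 - tau) * ib) * dot a a)
     = - (/ 2 * ib * (tau ^ 2 * dot c c)).
    rewrite Qhh Qhc. field.
  have : 0 <= / 2 * ib * (tau ^ 2 * dot c c).
    apply: Rmult_le_pos; first by apply: Rmult_le_pos; lra.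
    apply: Rmult_le_pos; [nra | exact: dot_ge0].
  lra.
have hM1 : nA1 ^ 2 / sigma1 <= Rmax (nA1 ^ 2 / sigma1) (nA2 ^ 2 / sigma2) by apply: Rmax_l.
have hM2 : nA2 ^ 2 / sigma2 <= Rmax (nA1 ^ 2 / sigma1) (nA2 ^ 2 / sigma2) by apply: Rmax_r.
have Kgen : forall nA sg, 0 < sg -> nA ^ 2 / sg <= Rmax (nA1 ^ 2 / sigma1) (nA2 ^ 2 / sigma2) ->
    nA ^ 2 * ib * tau ^ 2 <= (1 - tau) * beta1 / 2 * sg.
  move=> nA sg hsg hM.
  have p0 : 0 <= 2 * tau ^ 2 / (1 - tau) ^ 2.
    apply: Rmult_le_pos; first nra. apply: Rlt_le; apply: Rinv_0_lt_compat; nra.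
  have k1 := Rmult_le_compat_l _ _ _ p0 hM.
  have k2 : 2 * tau ^ 2 / (1 - tau) ^ 2 * (nA ^ 2 / sg) <= beta1 * beta2 by lra.
  have k3 : 2 * tau ^ 2 * nA ^ 2 <= beta1 * beta2 * ((1 - tau) ^ 2 * sg).
    have e : 2 * tau ^ 2 * nA ^ 2 = 2 * tau ^ 2 / (1 - tau) ^ 2 * (nA ^ 2 / sg) * ((1 - tau) ^ 2 * sg).
      field; split; lra.
    rewrite e; apply: Rmult_le_compat_r => //; apply: Rmult_le_pos; [apply: pow2_ge_0 | lra].
  apply: (Rmult_le_reg_r (2 * ((1 - tau) * beta2))); first nra.
  have e : nA ^ 2 * ib * tau ^ 2 * (2 * ((1 - tau) * beta2)) = 2 * tau ^ 2 * nA ^ 2.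
    rewrite Hib0; field; lra.
  rewrite e; nra.
have K1 := Kgen nA1 sigma1 hs1 hM1. have K2 := Kgen nA2 sigma2 hs2 hM2.
have K1D : nA1 ^ 2 * ib * (tau ^ 2 * dot D1 D1) <= (1 - tau) * (beta1 / 2 * (sigma1 * dot D1 D1)).
  have := Rmult_le_compat_r _ _ _ (dot_ge0 D1) K1. lra.
have K2D : nA2 ^ 2 * ib * (tau ^ 2 * dot D2 D2) <= (1 - tau) * (beta1 / 2 * (sigma2 * dot D2 D2)).
  have := Rmult_le_compat_r _ _ _ (dot_ge0 D2) K2. lra.
have G1 := Rmult_le_compat_l _ _ _ (Rlt_le _ _ ibp) O1.
have G2 := Rmult_le_compat_l _ _ _ (Rlt_le _ _ ibp) O2.
have Gx : ib * (2 * dot v1 v2) <= ib * (dot v1 v1 + dot v2 v2).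
  apply: Rmult_le_compat_l; first lra.
  have := dot_ge0 (vsub v1 v2). rewrite !dot_subl !dot_subr (dot_comm v2 v1). lra.
have HF : phi1 xb1 + phi2 xb2 + / 2 * ((1 - tau) * ib) * dot a a
   + beta1 / 2 * (sigma1 * dot D1 D1 + sigma2 * dot D2 D2) <=
   phi1 zs1 + phi2 zs2 + (dot yb c + (dot yb w1 + dot yb w2)) + beta1 * (p1 zs1 + p2 zs2) by lra.
have HF' := Rmult_le_compat_l (1 - tau) _ _ ltac:(lra) HF.
lra.
Qed.
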